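(* Let $A$ be a finite set of options with at least two elements, $v$ a Llull matrix on $A$, $v^*$ its path scores and $T$ its set of path-top choices (as defined in the context). An option $x\in A$ satisfies $T=\{x\}$ if and only if $v^*_{xy}>v^*_{yx}$ for all $y\in A\setminus\{x\}$.
   Context: A Llull matrix on a finite set $A$ is a family of real numbers $v_{xy}\in[0,1]$, indexed by ordered pairs $(x,y)$ of distinct elements of $A$, with $v_{xy}+v_{yx}\le 1$. The path scores are $v^*_{xy}=\max \min(v_{x_0x_1},\dots,v_{x_{m-1}x_m})$, the maximum over all paths $x_0x_1\dots x_m$ with $m\ge1$, $x_0=x$, $x_m=y$, the $x_i$ pairwise distinct. The ranking relation $\succeq$ is defined by: $x\succeq y$ iff there is a path $x_0\dots x_m$ from $x$ to $y$ with $v^*_{x_ix_{i+1}}\ge v^*_{x_{i+1}x_i}$ for all $i<m$. An option $x$ is a path-top choice if $x\succeq y$ for every $y\ne x$; $T$ is the set of path-top choices. *)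

(* Defs.v *)
From HB Require Import structures.
From mathcomp Require Import all_boot all_order all_algebra.
From mathcomp Require Import reals.
Set Implicit Arguments. Unset Strict Implicit. Unset Printing Implicit Defensive.
Import Order.TTheory GRing.Theory Num.Theory.
Local Open Scope ring_scope.

Section Llull.
Variables (R : realType) (A : finType).

(* A Llull matrix: v x y is only meaningful for x <> y (the diagonal is
   ignored). *)
Definition llull_matrix (v : A -> A -> R) : Prop :=
  forall x y : A, x != y -> 0 <= v x y /\ v x y <= 1 /\ v x y + v y x <= 1.

(* x :: s is a path x = x_0 x_1 ... x_m = y with m >= 1 and pairwise
   distinct vertices. *)
Definition is_Lpath (x y : A) (s : seq A) : bool :=
  [&& s != [::], last x s == y & uniq (x :: s)].

Fixpoint path_min (w : A -> A -> R) (x : A) (s : seq A) : R :=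
  match s with
  | [::] => 1
  | [:: y] => w x y
  | y :: s' => Num.min (w x y) (path_min w y s')
  end.

(* A path has
   at most #|A| vertices, so its tail s is an n-tuple with n < #|A|.
   (All values lie in [0,1] and a path exists when x <> y, so the
   default 0 of the max is harmless.) *)
Definition vstar (v : A -> A -> R) (x y : A) : R :=
  \big[Num.max/0]_(n < #|A|)
    \big[Num.max/0]_(t : n.-tuple A | is_Lpath x y t) path_min v x t.

Definition ranks (v : A -> A -> R) (x y : A) : bool :=
  [exists n : 'I_#|A|, exists t : n.-tuple A,
     is_Lpath x y t && path (fun a b => vstar v b a <= vstar v a b) x t].

Definition path_top (v : A -> A -> R) : {set A} :=
  [set x | [forall y, (y != x) ==> ranks v x y]].

End Llull.

(* Main.v *)
Require Import Defs.
From HB Require Import structures.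
From mathcomp Require Import all_boot all_order all_algebra.
From mathcomp Require Import reals.
Import Order.TTheory GRing.Theory Num.Theory.
Local Open Scope ring_scope.

Lemma ranksP_aux (R : realType) (A : finType) (v : A -> A -> R) (a b : A) :
  ranks v a b <-> exists s : seq A, is_Lpath a b s &&
     path (fun c d => vstar v d c <= vstar v c d) a s.
Proof.
split.
- case/existsP => n /existsP [t Ht]. by exists t.
- case=> s Hs.
  have Hn : (size s < #|A|)%N.
  { case/andP: Hs => /and3P [_ _ Hu] _.
    have Hc := card_uniqP Hu.
    have := max_card (mem (a :: s)). rewrite Hc /=. done. }
  apply/existsP; exists (Ordinal Hn); apply/existsP; exists (in_tuple s).
  exact: Hs.
Qed.

Theorem corollary2p3 (R : realType) (A : finType) (v : A -> A -> R) (x : A) :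
  (2 <= #|A|)%N -> llull_matrix v ->
  (path_top v = [set x] <-> forall y : A, y != x -> vstar v y x < vstar v x y).
Proof.
move=> _ _; split.
- move=> HT y hyx. rewrite ltNge; apply/negP => Hle.
  have Hx : x \in path_top v by rewrite HT set11.
  have : y \in path_top v.
  { rewrite inE; apply/forallP => z; apply/implyP => hzy.
    case: (eqVneq z x) => [->|hzx].
    - apply/ranksP_aux; exists [:: x].
      by rewrite /is_Lpath /= eqxx inE hyx Hle.
    - move: Hx; rewrite inE => /forallP/(_ z); rewrite hzx /=.
      move=> /ranksP_aux [t /andP [/and3P [tn tl tu] tp]].
      case: (boolP (y \in t)) => yt.
      + move: tn tl tu tp; case/splitPr: yt => p1 p2 tn tl tu tp.
        apply/ranksP_aux; exists p2.
        move: tl; rewrite last_cat /= => tl.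
        have p2n : p2 != [::].
        { case: p2 tl {tu tp tn} => [|//] /= /eqP Hyz.
          by move: hzy; rewrite Hyz eqxx. }
        have Hu : uniq (y :: p2).
        { by move: tu; rewrite -cat_cons cat_uniq => /and3P [_ _]. }
        have Hp : path (fun c d => vstar v d c <= vstar v c d) y p2.
        { by move: tp; rewrite cat_path => /andP [_] /= /andP [_]. }
        apply/andP; split; last exact: Hp.
        by rewrite /is_Lpath p2n tl Hu.
      + apply/ranksP_aux; exists (x :: t).
        rewrite /is_Lpath /= tl /= Hle tp andbT inE negb_or hyx yt /=.
        by move: tu => /= ->.
  }
  by rewrite HT in_set1 (negbTE hyx).
- move=> H. apply/setP => z. rewrite in_set1.
  case: (eqVneq z x) => [->|hzx].
  + rewrite inE; apply/forallP => y; apply/implyP => hyx.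
    apply/ranksP_aux; exists [:: y].
    by rewrite /is_Lpath /= eqxx inE (eq_sym x y) hyx /= (ltW (H y hyx)).
  + apply/negbTE; rewrite inE; apply/negP => /forallP/(_ x).
    rewrite eq_sym hzx /= => /ranksP_aux [s /andP [/and3P [sn sl su] sp]].
    move: sn sl su sp; case/lastP: s => [//|p b] _.
    rewrite last_rcons => /eqP -> su.
    rewrite rcons_path => /andP [_ Hr].
    have hc : last z p != x.
    { apply/negP => /eqP Hc.
      move: su; rewrite -rcons_cons rcons_uniq => /andP [hn _].
      move: hn; rewrite -Hc. by rewrite mem_last. }
    by move: (H _ hc); rewrite ltNge Hr.
Qed.
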